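(* Let $f\colon\mathbb{R}^d\to\mathbb{R}\cup\{\infty\}$ be a lower semicontinuous convex function, let $Q\subseteq\mathbb{R}^d$ be a nonempty closed convex set contained in the domain of $f$, and assume the set $X^*$ of minimizers of $f$ over $Q$ is nonempty, with minimum value $f^*$. Suppose $f$ has $\mu$-quadratic growth for some $\mu>0$: $f(x)\ge f^*+\frac{\mu}{2}\mathrm{dist}(x,X^* )^2$ for all $x\in Q$. Let $g(x;\xi)$ be a stochastic subgradient oracle with $\mathbb{E}_{\xi\sim D}\,g(x;\xi)\in\partial f(x)$ for all $x\in Q$, and suppose there are constants $L_0,L_1\ge0$ with $$\mathbb{E}_\xi\|g(x;\xi)\|^2\le L_0^2+L_1(f(x)-f^* )\qquad\text{for all }x\in Q.$$ Let $x_0\in Q$ and consider $x_{k+1}=P_Q(x_k-\alpha_kg(x_k;\xi_k))$ with $\xi_k\sim D$ i.i.d. and $$\alpha_k=\frac{4}{\mu(k+2)+\frac{4L_1^2}{\mu(k+1)}}.$$ Then for every $T\ge0$, $$\mathbb{E}_{\xi_{0\dots T}}\left[f\left(\frac{\sum_{k=0}^T(k+1)(1-L_1\alpha_k)x_k}{\sum_{k=0}^T(k+1)(1-L_1\alpha_k)}\right)-f^*\right]\le\frac{4L_0^2(T+1)+L_1^2\,\mathrm{dist}(x_0,X^* )^2}{\mu\sum_{k=0}^T(k+1)(1-L_1\alpha_k)}.$$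
   Context: $\mathrm{dist}(x,X^* )$ is the Euclidean distance from $x$ to $X^*$. $P_Q$ is orthogonal projection onto $Q$; $\partial f(x)=\{g: f(y)\ge f(x)+g^T(y-x)\ \forall y\in\mathbb{R}^d\}$; $\mathbb{E}_{\xi_{0\dots T}}$ is expectation over the i.i.d. samples $\xi_0,\dots,\xi_T$. *)

(* Defs.v *)
From HB Require Import structures.
From mathcomp Require Import all_boot all_order all_algebra.
From mathcomp Require Import all_classical all_reals all_analysis.
Set Implicit Arguments. Unset Strict Implicit. Unset Printing Implicit Defensive.
Import Order.TTheory GRing.Theory Num.Theory.
Import numFieldNormedType.Exports.
Local Open Scope classical_set_scope.
Local Open Scope ring_scope.

Section Defs.
Variables (R : realType) (d : nat).

Definition dotv (u v : 'rV[R]_d) : R := \sum_(i < d) u 0 i * v 0 i.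
Definition enorm (u : 'rV[R]_d) : R := Num.sqrt (dotv u u).

Definition setdist (x : 'rV[R]_d) (A : set 'rV[R]_d) : R :=
  inf [set enorm (x - y) | y in A].

Definition convex_setv (Q : set 'rV[R]_d) : Prop :=
  forall (x y : 'rV[R]_d) (t : R), Q x -> Q y -> 0 <= t <= 1 -> Q (t *: x + (1 - t) *: y).

Definition convex_efun (f : 'rV[R]_d -> \bar R) : Prop :=
  forall (x y : 'rV[R]_d) (t : R), 0 <= t <= 1 ->
    (f (t *: x + (1 - t) *: y)%R <= t%:E * f x + (1 - t)%R%:E * f y)%E.

Definition is_proj (Q : set 'rV[R]_d) (x p : 'rV[R]_d) : Prop :=
  Q p /\ forall y, Q y -> enorm (x - p) <= enorm (x - y).

Definition is_subgrad (f : 'rV[R]_d -> \bar R) (x g : 'rV[R]_d) : Prop :=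
  forall y, (f x + (dotv g (y - x)%R)%:E <= f y)%E.

Definition stepsize (mu L1 : R) (k : nat) : R :=
  4 / (mu * (k.+2)%:R + 4 * L1 ^+ 2 / (mu * (k.+1)%:R)).

Definition sg_weight (mu L1 : R) (k : nat) : R :=
  (k.+1)%:R * (1 - L1 * stepsize mu L1 k).

Section Iterates.
Variables (Xi : Type) (P : 'rV[R]_d -> 'rV[R]_d)
          (g : 'rV[R]_d -> Xi -> 'rV[R]_d) (mu L1 : R).

Fixpoint sg_run (k : nat) (x : 'rV[R]_d) (s : seq Xi) : 'rV[R]_d :=
  match s with
  | [::] => x
  | xi :: s' => sg_run k.+1 (P (x - stepsize mu L1 k *: g x xi)) s'
  end.

(* x_k as a function of the sample sequence s = [:: xi_0; xi_1; ...] *)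
Definition sg_iter (x0 : 'rV[R]_d) (s : seq Xi) (k : nat) : 'rV[R]_d :=
  sg_run 0 x0 (take k s).

Definition sg_avg (x0 : 'rV[R]_d) (T : nat) (s : seq Xi) : 'rV[R]_d :=
  (\sum_(k < T.+1) sg_weight mu L1 k)^-1 *:
    \sum_(k < T.+1) sg_weight mu L1 k *: sg_iter x0 s k.
End Iterates.

End Defs.

(* Expectation over n i.i.d. samples xi_0, ..., xi_{n-1} ~ D of a function of
   the sample list, written as the iterated integral (xi_0 outermost). *)
Fixpoint iterE {dk} {Xi : measurableType dk} {R : realType}
  (D : probability Xi R) (n : nat) (F : seq Xi -> \bar R) : \bar R :=
  match n with
  | 0 => F [::]
  | n'.+1 => (\int[D]_xi iterE D n' (fun s => F (xi :: s)))%E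
  end.

(* Main.v *)
Require Import Defs.
From HB Require Import structures.
From mathcomp Require Import all_boot all_order all_algebra.
From mathcomp Require Import all_classical all_reals all_analysis.
From mathcomp Require Import ring lra.
Import Order.TTheory GRing.Theory Num.Theory.
Import numFieldNormedType.Exports.
Local Open Scope classical_set_scope.
Local Open Scope ring_scope.
Lemma le_integral_any (dk : measure_display) (T : measurableType dk) (R : realType)
  (mu : {measure set T -> \bar R}) (f g : T -> \bar R) :
  (forall x, (f x <= g x)%E) ->
  (\int[mu]_(x in setT) f x <= \int[mu]_(x in setT) g x)%E.
Proof.
move=> fg; rewrite /integral !patch_setT; apply: leeB.
  apply: ereal_sup_le => _ [h /= hf <-]; exists h => //= x.
  apply: le_trans (hf x) _; rewrite !funeposE; apply: le_max2 => //.
apply: ereal_sup_le => _ [h /= hf <-]; exists h => //= x.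
apply: le_trans (hf x) _; rewrite !funenegE; apply: le_max2 => //.
by rewrite leeN2.
Qed.

Lemma iterE_mono (dk : measure_display) (Xi : measurableType dk) (R : realType)
  (D : probability Xi R) n (F G : seq Xi -> \bar R) :
  (forall s, size s = n -> (F s <= G s)%E) -> (iterE D n F <= iterE D n G)%E.
Proof.
elim: n F G => [|n IH] F G FG /=; first exact: FG.
apply: le_integral_any => xi; apply: IH => s hs; apply: FG => /=; by rewrite hs.
Qed.
Section Vec.
Variables (R : realType) (d : nat).
Implicit Types (u v w : 'rV[R]_d).

Lemma dotvC u v : dotv u v = dotv v u.
Proof. by apply: eq_bigr => i _; rewrite mulrC. Qed.
Lemma dotvDl u v w : dotv (u + v) w = dotv u w + dotv v w.
Proof. by rewrite /dotv -big_split; apply: eq_bigr => i _; rewrite mxE mulrDl. Qed.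
Lemma dotvZl a u w : dotv (a *: u) w = a * dotv u w.
Proof. by rewrite /dotv mulr_sumr; apply: eq_bigr => i _; rewrite mxE mulrA. Qed.
Lemma dotvNl u w : dotv (- u) w = - dotv u w.
Proof. by rewrite -scaleN1r dotvZl mulN1r. Qed.
Lemma dotvDr u v w : dotv w (u + v) = dotv w u + dotv w v.
Proof. by rewrite dotvC dotvDl !(dotvC w). Qed.
Lemma dotvZr a u w : dotv w (a *: u) = a * dotv w u.
Proof. by rewrite dotvC dotvZl dotvC. Qed.
Lemma dotvNr u w : dotv w (- u) = - dotv w u.
Proof. by rewrite dotvC dotvNl dotvC. Qed.
Lemma dotv_ge0 u : 0 <= dotv u u.
Proof. by apply: sumr_ge0 => i _; rewrite -expr2 sqr_ge0. Qed.
Lemma enorm2 u : enorm u ^+ 2 = dotv u u.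
Proof. by rewrite /enorm sqr_sqrtr // dotv_ge0. Qed.
Lemma enorm_ge0 u : 0 <= enorm u.
Proof. exact: sqrtr_ge0. Qed.

Lemma enorm_le2 u v : (enorm u <= enorm v) = (dotv u u <= dotv v v).
Proof. by rewrite /enorm ler_sqrt // dotv_ge0. Qed.

Lemma dotv_expand u v a :
  dotv (u - a *: v) (u - a *: v) = dotv u u - 2 * a * dotv u v + a ^+ 2 * dotv v v.
Proof.
rewrite !(dotvDl, dotvDr, dotvNl, dotvNr, dotvZl, dotvZr) (dotvC v u); ring.
Qed.

Lemma proj_obtuse {Q : set 'rV[R]_d} {z p y} :
  convex_setv Q -> is_proj Q z p -> Q y -> dotv (z - p) (y - p) <= 0.
Proof.
move=> cQ [Qp pmin] Qy.
set a := dotv (z - p) (y - p); set b := dotv (y - p) (y - p).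
have b0 : 0 <= b by apply: dotv_ge0.
have key : forall t, 0 <= t <= 1 -> 2 * t * a <= t ^+ 2 * b.
  move=> t t01; have Qq := cQ _ _ _ Qy Qp t01.
  have := pmin _ Qq; rewrite enorm_le2.
  have -> : z - (t *: y + (1 - t) *: p) = (z - p) - t *: (y - p).
    by apply/rowP => i; rewrite !mxE; ring.
  rewrite dotv_expand -/a -/b; lra.
rewrite leNgt; apply/negP => a0.
have ab0 : 0 < a + b by lra.
have t01 : 0 <= a / (a + b) <= 1.
  by apply/andP; split; [apply: divr_ge0; lra| rewrite ler_pdivrMr //; lra].
have := key _ t01.
rewrite -(ler_pM2r ab0) expr2.
have -> : 2 * (a / (a + b)) * a * (a + b) = 2 * a * a.
  by field; rewrite gt_eqF.
have -> : a / (a + b) * (a / (a + b)) * b * (a + b) = a * a * (b / (a + b)).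
  by field; rewrite gt_eqF.
have : b / (a + b) <= 1 by rewrite ler_pdivrMr //; lra.
move=> h1 h2; have : a * a * (b / (a + b)) <= a * a by
  rewrite -[X in _ <= X]mulr1; apply: ler_wpM2l => //; nra.
nra.
Qed.

Lemma proj_nonexp {Q : set 'rV[R]_d} {z p y} :
  convex_setv Q -> is_proj Q z p -> Q y -> dotv (p - y) (p - y) <= dotv (z - y) (z - y).
Proof.
move=> cQ pr Qy; have h := proj_obtuse cQ pr Qy.
have -> : z - y = (z - p) - (-1) *: (p - y) by apply/rowP => i; rewrite !mxE; ring.
rewrite dotv_expand.
have -> : p - y = - (y - p) by apply/rowP => i; rewrite !mxE; ring.
rewrite dotvNr !dotvNl dotvNr opprK.
have := dotv_ge0 (z - p); lra.
Qed.

Lemma setdist_ge0 x (A : set 'rV[R]_d) : A !=set0 -> 0 <= setdist x A.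
Proof.
move=> [y Ay]; apply: lb_le_inf; first by exists (enorm (x - y)), y.
by move=> _ [z _ <-]; apply: enorm_ge0.
Qed.

Lemma setdist_le x (A : set 'rV[R]_d) y : A y -> setdist x A <= enorm (x - y).
Proof.
move=> Ay; apply: ge_inf; first by exists 0 => _ [z _ <-]; apply: enorm_ge0.
by exists y.
Qed.

Lemma setdist_approx x (A : set 'rV[R]_d) e : A !=set0 -> 0 < e ->
  exists2 y, A y & dotv (x - y) (x - y) < setdist x A ^+ 2 + e.
Proof.
move=> [y0 Ay0] e0.
set ds := setdist x A.
have ds0 : 0 <= ds by apply: setdist_ge0; exists y0.
set eta := Num.sqrt (ds ^+ 2 + e) - ds.
have eta0 : 0 < eta.
  rewrite /eta subr_gt0 {1}(_ : ds = Num.sqrt (ds ^+ 2)); last by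
    rewrite sqrtr_sqr ger0_norm.
  rewrite ltr_sqrt; first lra.
  by have := sqr_ge0 ds; lra.
have hi : has_inf [set enorm (x - y) | y in A].
  split; first by exists (enorm (x - y0)), y0.
  by exists 0 => _ [z _ <-]; apply: enorm_ge0.
have [r [y Ay <-] hr] := inf_adherent eta0 hi.
exists y => //.
have hr' : enorm (x - y) < Num.sqrt (ds ^+ 2 + e) by rewrite /eta in hr; move: hr; rewrite -/ds; lra.
rewrite -enorm2 -(@sqr_sqrtr _ (ds ^+ 2 + e)); last by have := sqr_ge0 ds; lra.
rewrite ltrXn2r // ?enorm_ge0 ?sqrtr_ge0 //.
Qed.
End Vec.
Section Alg.
Variables (R : realType) (mu L1 : R).
Hypothesis mu0 : 0 < mu.
Hypothesis L1ge : 0 <= L1.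

Definition ck (k : nat) : R := mu * (k.+1)%:R * k%:R / 4 + L1 ^+ 2 / mu.

Definition den k := mu * (k.+2)%:R + 4 * L1 ^+ 2 / (mu * (k.+1)%:R).

Lemma den_gt0 k : 0 < den k.
Proof.
rewrite /den.
have h1 : 0 < mu * k.+2%:R by rewrite mulr_gt0.
have h2 : 0 <= 4 * L1 ^+ 2 / (mu * k.+1%:R).
  by rewrite divr_ge0 ?mulr_ge0 ?sqr_ge0 // ltW.
by rewrite (lt_le_trans h1) // lerDl.
Qed.

Lemma alpha_gt0 k : 0 < stepsize mu L1 k.
Proof. by rewrite /stepsize divr_gt0 // den_gt0. Qed.

Lemma ck_ge0 k : 0 <= ck k.
Proof.
rewrite /ck addr_ge0 //; last by rewrite divr_ge0 ?sqr_ge0 // ltW.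
by rewrite divr_ge0 // !mulr_ge0 // ltW.
Qed.

Lemma ck_gt0 k : 0 < ck k.+1.
Proof.
rewrite /ck ltr_pwDl //; last by rewrite divr_ge0 ?sqr_ge0 // ltW.
by rewrite divr_gt0 // !mulr_gt0.
Qed.

Lemma ck_alpha k : ck k.+1 * stepsize mu L1 k = (k.+1)%:R.
Proof.
rewrite /ck /stepsize -[(k.+2)%:R]natr1 -[(k.+1)%:R]natr1.
have k0 : 0 <= k%:R :> R by [].
have h : mu * (k%:R + 1 + 1) + 4 * L1 ^+ 2 / (mu * (k%:R + 1)) != 0.
  by have := den_gt0 k; rewrite /den -[(k.+2)%:R]natr1 -[(k.+1)%:R]natr1 => /gt_eqF ->.
field; rewrite ?h ?gt_eqF //; try lra.
have hk1 : 0 < k%:R + 1 :> R by rewrite natr1.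
have hk2 : 0 < k%:R + 1 + 1 :> R by rewrite !natr1.
have h3 : 0 < mu * (k%:R + 1 + 1) * (mu * (k%:R + 1)).
  exact: mulr_gt0 (mulr_gt0 mu0 hk2) (mulr_gt0 mu0 hk1).
by rewrite (lt_le_trans h3) // lerDl mulr_ge0 // sqr_ge0.
Qed.

Lemma ck_rec k : ck k.+1 - (k.+1)%:R * mu / 2 = ck k.
Proof.
rewrite /ck -[(k.+2)%:R]natr1 -[(k.+1)%:R]natr1; field.
by rewrite gt_eqF.
Qed.

Lemma kalpha_le k : (k.+1)%:R * stepsize mu L1 k <= 4 / mu.
Proof.
rewrite /stepsize mulrA (mulrC _ 4).
have -> : 4 / mu = 4 * (k.+1)%:R / (mu * (k.+1)%:R).
  by field; rewrite (gt_eqF mu0) addrC natr1 pnatr_eq0.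
apply: ler_wpM2l; first by rewrite mulr_ge0.
rewrite lef_pV2 ?posrE ?den_gt0 ?mulr_gt0 //.
rewrite -[(k.+2)%:R]natr1 mulrDr mulr1 -addrA lerDl.
apply: addr_ge0; first exact: ltW.
apply: divr_ge0; first by rewrite mulr_ge0 // sqr_ge0.
by rewrite mulr_ge0 // ltW.
Qed.

Lemma weight_gt0 k : 0 < sg_weight mu L1 k.
Proof.
rewrite /sg_weight mulr_gt0 // subr_gt0 /stepsize.
have dg := den_gt0 k; rewrite /den in dg.
rewrite mulrA ltr_pdivrMr // mul1r.
set a := mu * (k.+1)%:R.
have a0 : 0 < a by rewrite mulr_gt0.
have -> : mu * (k.+2)%:R = a + mu by rewrite /a -[(k.+2)%:R]natr1 mulrDr mulr1.
have : 0 <= (a - 2 * L1) ^+ 2 / a by rewrite divr_ge0 ?sqr_ge0 // ltW.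
have -> : (a - 2 * L1) ^+ 2 / a = a + 4 * L1 ^+ 2 / a - 4 * L1 by field; rewrite gt_eqF.
move: (4 * L1 ^+ 2 / a) => X h. have := mu0; lra.
Qed.

End Alg.
Arguments ck {R}.
Section Main.
Variables (R : realType) (d : nat) (f : 'rV[R]_d -> \bar R)
  (Q : set 'rV[R]_d) (fstar mu L0 L1 : R)
  (dk : measure_display) (Xi : measurableType dk) (D : probability Xi R)
  (g : 'rV[R]_d -> Xi -> 'rV[R]_d) (P : 'rV[R]_d -> 'rV[R]_d).
Hypothesis fnoo : forall x, f x != -oo%E.
Hypothesis Qfin : forall x, Q x -> (f x < +oo)%E.
Hypothesis gmeas : forall x, Q x -> forall i : 'I_d,
     measurable_fun setT (fun xi => g x xi 0 i).
Hypothesis gint : forall x, Q x -> forall i : 'I_d,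
     D.-integrable setT (fun xi => (g x xi 0 i)%:E).
Hypothesis gsub : forall x, Q x ->
     is_subgrad f x (\row_(i < d) fine (\int[D]_xi (g x xi 0 i)%:E)%E).
Hypothesis gmom : forall x, Q x ->
     (\int[D]_xi ((enorm (g x xi)) ^+ 2)%:E
        <= (L0 ^+ 2)%:E + L1%:E * (f x - fstar%:E))%E.

Lemma fQ {x} : Q x -> f x = (fine (f x))%:E.
Proof.
move=> Qx; rewrite fineK // fin_numE fnoo /=.
by rewrite (lt_eqF (Qfin _ Qx)).
Qed.

Lemma int_dot {x} (v : 'rV[R]_d) : Q x ->
  (\int[D]_xi (dotv v (g x xi))%:E)%E =
  (dotv v (\row_(i < d) fine (\int[D]_xi (g x xi 0 i)%:E)%E))%:E.
Proof.
move=> Qx.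
have e : (fun xi => (dotv v (g x xi))%:E) =
   (fun xi => (\sum_(i < d) ((v 0 i)%:E * (g x xi 0 i)%:E))%E).
  by apply/funext => xi; rewrite /dotv -sumEFin; apply: eq_bigr => i _; rewrite EFinM.
rewrite e integral_sum //; last by move=> i; apply: integrableZl => //; exact: gint.
rewrite /dotv -sumEFin; apply: eq_bigr => i _.
rewrite integralZl //; last exact: gint.
by rewrite mxE EFinM fineK // integrable_fin_num //; exact: gint.
Qed.

Lemma sq_meas {x} : Q x -> measurable_fun setT (fun xi => dotv (g x xi) (g x xi)).
Proof.
move=> Qx; rewrite /dotv; apply: measurable_sum => i.
by apply: measurable_realfun.measurable_funM; apply: gmeas.
Qed.

Lemma sq_int {x} : Q x -> D.-integrable setT (fun xi => (dotv (g x xi) (g x xi))%:E).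
Proof.
move=> Qx; apply/integrableP; split; first by apply/measurable_realfun.measurable_EFinP; apply: sq_meas.
under eq_integral => xi _ do rewrite gee0_abs ?lee_fin ?dotv_ge0 // -enorm2.
apply: le_lt_trans (gmom _ Qx) _.
by rewrite (fQ Qx) -EFinB -EFinM -EFinD ltry.
Qed.

Lemma sq_bound {x} : Q x ->
  (\int[D]_xi (dotv (g x xi) (g x xi))%:E)%E
   = (fine (\int[D]_xi (dotv (g x xi) (g x xi))%:E))%:E /\
  (fine (\int[D]_xi (dotv (g x xi) (g x xi))%:E) <=
     L0 ^+ 2 + L1 * (fine (f x) - fstar))%R.
Proof.
move=> Qx.
have fin : (\int[D]_xi (dotv (g x xi) (g x xi))%:E)%E \is a fin_num.
  exact: integrable_fin_num (sq_int Qx).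
split; first by rewrite fineK.
rewrite -lee_fin fineK //.
have := gmom _ Qx; under eq_integral => xi _ do rewrite enorm2.
by rewrite (fQ Qx) -EFinB -EFinM -EFinD.
Qed.

Lemma step_int x y (B c a : R) : Q x -> f y = fstar%:E -> (0 <= c)%R -> (0 <= a)%R ->
  (\int[D]_xi (B + c * dotv (x - a *: g x xi - y) (x - a *: g x xi - y))%:E
   <= (B + c * (dotv (x - y) (x - y) - 2 * a * (fine (f x) - fstar)
         + a ^+ 2 * (L0 ^+ 2 + L1 * (fine (f x) - fstar))))%:E)%E.
Proof.
move=> Qx fy c0 a0.
set v := x - y.
set m := \row_(i < d) fine (\int[D]_xi (g x xi 0 i)%:E)%E.
have hsub : (fine (f x) - fstar <= dotv v m)%R.
  have := gsub _ Qx y; rewrite fy -/m {1}(fQ Qx) -EFinD lee_fin.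
  have -> : y - x = - v by rewrite /v opprB.
  rewrite dotvNr dotvC => h; have := h; move: (dotv v m) (fine (f x)) => A F.
  move=> h'; lra.
have [I2e I2le] := sq_bound Qx.
have e1 : forall xi, (B + c * dotv (x - a *: g x xi - y) (x - a *: g x xi - y))%:E =
   ((B + c * dotv v v)%:E + ((- 2 * a * c)%:E * (dotv v (g x xi))%:E
      + (c * a ^+ 2)%:E * (dotv (g x xi) (g x xi))%:E))%E.
  move=> xi; rewrite (addrAC x) dotv_expand -!EFinM -!EFinD; congr EFin; ring.
under eq_integral => xi _ do rewrite e1.
rewrite integralD //; first last.
- apply: integrableD => //; apply: integrableZl => //; last exact: sq_int.
  apply/integrableP; split.
    apply/measurable_realfun.measurable_EFinP; rewrite /dotv; apply: measurable_sum => i.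
    apply: measurable_realfun.measurable_funM; [exact: measurable_cst| exact: gmeas].
  have ie : D.-integrable setT (fun xi => (dotv v (g x xi))%:E).
    have -> : (fun xi => (dotv v (g x xi))%:E) =
       (fun xi => (\sum_(i < d) ((v 0 i)%:E * (g x xi 0 i)%:E))%E).
      by apply/funext => xi; rewrite /dotv -sumEFin; apply: eq_bigr => i _; rewrite EFinM.
    by apply: integrable_sum => // i _; apply: integrableZl => //; exact: gint.
  by move/integrableP : ie => [].
- exact: (finite_measure_integrable_cst D (B + c * dotv v v)%R).
have hD : D [set: Xi] = 1%E by exact: probability_setT.
rewrite integral_cst //.
rewrite [X in (_ * X + _)%E]probability_setT mule1.
rewrite integralD //; first last.
- by apply: integrableZl => //; exact: sq_int.
- apply: integrableZl => //.
  have -> : (fun xi => (dotv v (g x xi))%:E) =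
     (fun xi => (\sum_(i < d) ((v 0 i)%:E * (g x xi 0 i)%:E))%E).
    by apply/funext => xi; rewrite /dotv -sumEFin; apply: eq_bigr => i _; rewrite EFinM.
  by apply: integrable_sum => // i _; apply: integrableZl => //; exact: gint.
rewrite integralZl //; last first.
  have -> : (fun xi => (dotv v (g x xi))%:E) =
     (fun xi => (\sum_(i < d) ((v 0 i)%:E * (g x xi 0 i)%:E))%E).
    by apply/funext => xi; rewrite /dotv -sumEFin; apply: eq_bigr => i _; rewrite EFinM.
  by apply: integrable_sum => // i _; apply: integrableZl => //; exact: gint.
rewrite integralZl //; last exact: sq_int.
rewrite int_dot // -/m I2e -!EFinM -!EFinD lee_fin.
move: I2le hsub; move: (fine _) => I2 hI2 hs.
have h1 : (c * a * (fine (f x) - fstar) <= c * a * dotv v m)%R.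
  by rewrite ler_wpM2l // mulr_ge0.
have h2 : (c * a ^+ 2 * I2 <= c * a ^+ 2 * (L0 ^+ 2 + L1 * (fine (f x) - fstar)))%R.
  by rewrite ler_wpM2l // mulr_ge0 // exprn_ge0.
move: h1 h2; move: (fine (f x)) => F h1 h2.
suff : (B + c * dotv v v + (- 2 * a * c * dotv v m + c * a ^+ 2 * I2) <=
  B + c * (dotv v v - 2 * a * (F - fstar) + a ^+ 2 * (L0 ^+ 2 + L1 * (F - fstar))))%R by [].
lra.
Qed.

Hypothesis cQ : convex_setv Q.
Hypothesis Pproj : forall x, is_proj Q x (P x).
Hypothesis Xne : exists2 xs, Q xs & f xs = fstar%:E.
Hypothesis mu0 : 0 < mu.
Hypothesis L1ge : 0 <= L1.
Hypothesis qg : forall x, Q x ->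
     ((fstar + mu / 2 * setdist x [set z | Q z /\ f z = fstar%:E] ^+ 2)%:E
        <= f x)%E.

Fixpoint costR (k : nat) (x : 'rV[R]_d) (s : seq Xi) : R :=
  match s with
  | [::] => 0
  | xi :: s' => sg_weight mu L1 k * (fine (f x) - fstar)
                + costR k.+1 (P (x - stepsize mu L1 k *: g x xi)) s'
  end.

Definition Ssum k n := \sum_(j < n) (k + j).+1%:R * stepsize mu L1 (k + j).

Lemma Ssum_rec k n : Ssum k n.+1 = k.+1%:R * stepsize mu L1 k + Ssum k.+1 n.
Proof.
rewrite /Ssum big_ord_recl addn0; congr (_ + _); apply: eq_bigr => j _.
by rewrite lift0 addnS addSn.
Qed.

Lemma Ssum_ge0 k n : 0 <= Ssum k n.
Proof.
apply: sumr_ge0 => j _; apply: mulr_ge0 => //; apply: ltW; exact: alpha_gt0.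
Qed.

Lemma run_Q k x s : Q x -> Q (sg_run P g mu L1 k x s).
Proof.
elim: s k x => //= xi s IH k x Qx; apply: IH; exact: (Pproj _).1.
Qed.

Lemma main_bound lam n : 0 < lam -> forall k x A, Q x ->
  (iterE D n (fun s => (A + lam * costR k x s)%:E) <=
   (A + lam * (ck mu L1 k * setdist x [set z | Q z /\ f z = fstar%:E] ^+ 2
               + L0 ^+ 2 * Ssum k n))%:E)%E.
Proof.
move=> lam0; elim: n => [|n IH] k x A Qx /=.
  rewrite lee_fin /Ssum big_ord0 !mulr0 !addr0 lerDl.
  apply: mulr_ge0; first exact: ltW.
  apply: mulr_ge0; last exact: sqr_ge0.
  by apply: ck_ge0.
set Xs := [set z | Q z /\ f z = fstar%:E].
set dl := fine (f x) - fstar.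
set al := stepsize mu L1 k.
have al0 : 0 < al by apply: alpha_gt0.
have ck1 : 0 < ck mu L1 k.+1 by apply: ck_gt0.
have Xne' : Xs !=set0 by case: Xne => z ? ?; exists z.
apply/lee_addgt0Pr => eps eps0.
have e'0 : 0 < eps / (lam * ck mu L1 k.+1) by rewrite divr_gt0 // mulr_gt0.
have [y [Qy fy] hy] := @setdist_approx R d x Xs _ Xne' e'0.
apply: le_trans.
  apply: le_integral_any => xi.
  have -> : (fun s => (A + lam * (sg_weight mu L1 k * dl
       + costR k.+1 (P (x - al *: g x xi)) s))%:E) =
     (fun s => ((A + lam * sg_weight mu L1 k * dl)
       + lam * costR k.+1 (P (x - al *: g x xi)) s)%:E).
    by apply/funext => s; congr EFin; ring.
  apply: IH; exact: (Pproj _).1.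
apply: le_trans.
  apply: (@le_integral_any _ _ _ D _ (fun xi =>
     ((A + lam * sg_weight mu L1 k * dl + lam * (L0 ^+ 2 * Ssum k.+1 n))
      + lam * ck mu L1 k.+1 *
        dotv (x - al *: g x xi - y) (x - al *: g x xi - y))%:E)) => xi.
  rewrite lee_fin.
  set z := x - al *: g x xi.
  have h1 := @setdist_le R d (P z) Xs y (conj Qy fy).
  have h0 := @setdist_ge0 R d (P z) Xs Xne'.
  have h2 := @proj_nonexp R d Q z (P z) y cQ (Pproj z) Qy.
  have h3 : setdist (P z) Xs ^+ 2 <= dotv (z - y) (z - y).
    apply: le_trans h2; rewrite -enorm2 !expr2; apply: ler_pM => //.
  have h4 : lam * ck mu L1 k.+1 * setdist (P z) Xs ^+ 2 <=
            lam * ck mu L1 k.+1 * dotv (z - y) (z - y).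
    by rewrite ler_wpM2l // mulr_ge0 // ltW.
  move: h4; move: (setdist (P z) Xs ^+ 2) (dotv (z - y) (z - y)) => S2 D2 h4.
  suff : A + lam * sg_weight mu L1 k * dl +
     lam * (ck mu L1 k.+1 * S2 + L0 ^+ 2 * Ssum k.+1 n) <=
     A + lam * sg_weight mu L1 k * dl + lam * (L0 ^+ 2 * Ssum k.+1 n) +
     lam * ck mu L1 k.+1 * D2 by [].
  lra.
apply: le_trans.
  apply: step_int => //; first by rewrite mulr_ge0 // ltW.
  exact: ltW.
rewrite -EFinD lee_fin Ssum_rec.
have hal : ck mu L1 k.+1 * al = k.+1%:R by apply: ck_alpha.
have hrec : ck mu L1 k.+1 - k.+1%:R * mu / 2 = ck mu L1 k by apply: ck_rec.
have hq : mu / 2 * setdist x Xs ^+ 2 <= dl.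
  have := qg _ Qx; rewrite -/Xs (fQ Qx) lee_fin /dl; move: (fine (f x)) => F h; lra.
have hy' : lam * ck mu L1 k.+1 * dotv (x - y) (x - y) <=
   lam * ck mu L1 k.+1 * setdist x Xs ^+ 2 + eps.
  have -> : eps = lam * ck mu L1 k.+1 * (eps / (lam * ck mu L1 k.+1)).
    by field; rewrite (gt_eqF lam0) (gt_eqF ck1).
  rewrite -mulrDr ler_wpM2l ?mulr_ge0 ?ltW //.
have hq' : lam * k.+1%:R * (mu / 2 * setdist x Xs ^+ 2) <= lam * k.+1%:R * dl.
  by rewrite ler_wpM2l // mulr_ge0 // ltW.
rewrite /sg_weight -/al -hrec.
have -> : lam * ck mu L1 k.+1 *
    (dotv (x - y) (x - y) - 2 * al * dl + al ^+ 2 * (L0 ^+ 2 + L1 * dl)) =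
    lam * ck mu L1 k.+1 * dotv (x - y) (x - y) - 2 * lam * (ck mu L1 k.+1 * al) * dl
    + lam * (ck mu L1 k.+1 * al) * al * (L0 ^+ 2 + L1 * dl) by ring.
rewrite hal.
move: hy' hq'; move: (dotv (x - y) (x - y)) (setdist x Xs ^+ 2) (ck mu L1 k.+1)
  (k.+1%:R) (Ssum k.+1 n) => V2 S2 C K S h1 h2.
have := eps0; lra.
Qed.

Hypothesis cvx : convex_efun f.

Lemma sum_pos (w : nat -> R) n : (forall j, 0 < w j) -> 0 < \sum_(j < n.+1) w j.
Proof.
move=> w0; rewrite big_ord_recr /=.
have : 0 <= \sum_(i < n) w i by apply: sumr_ge0 => i _; apply: ltW.
have := w0 n; move: (\sum_(i < n) w i) (w n) => a b h1 h2.
suff : 0 < a + b by []. lra.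
Qed.

Lemma jensen n (w : nat -> R) (z : nat -> 'rV[R]_d) (h : nat -> R) :
  (forall j, 0 < w j) -> (forall j, f (z j) = (h j)%:E) ->
  (f ((\sum_(j < n.+1) w j)^-1 *: \sum_(j < n.+1) w j *: z j) <=
   ((\sum_(j < n.+1) w j)^-1 * \sum_(j < n.+1) w j * h j)%:E)%E.
Proof.
move=> w0 fz; elim: n => [|n IH].
  rewrite !big_ord1 scalerA mulVf ?gt_eqF // scale1r mulrA mulVf ?gt_eqF //.
  by rewrite mul1r fz.
have S0 := sum_pos w n w0.
rewrite (big_ord_recr n.+1) (big_ord_recr n.+1 (fun j => w j *: z j))
  (big_ord_recr n.+1 (fun j => w j * h j)) /=.
move: IH S0.
set S := \sum_(i < n.+1) w i.
set V := \sum_(i < n.+1) w i *: z i.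
set H := \sum_(i < n.+1) w i * h i.
move=> IH S0.
have wn := w0 n.+1.
have Sw : S + w n.+1 != 0 by rewrite gt_eqF // addr_gt0.
set t := S / (S + w n.+1).
have -> : (S + w n.+1)^-1 *: (V + w n.+1 *: z n.+1) =
          t *: (S^-1 *: V) + (1 - t) *: z n.+1.
  rewrite scalerDr !scalerA; congr (_ + _); congr (_ *: _); rewrite /t; field.
    by rewrite Sw gt_eqF.
  by rewrite Sw.
have t01 : 0 <= t <= 1.
  apply/andP; split; first by rewrite divr_ge0 // ltW // addr_gt0.
  rewrite ler_pdivrMr ?addr_gt0 // mul1r lerDl; exact: ltW.
apply: le_trans (cvx _ _ _ t01) _.
apply: le_trans.
  apply: leeD; last exact: le_refl.
  apply: lee_wpmul2l; last exact: IH.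
  by rewrite lee_fin; case/andP: t01.
rewrite fz -!EFinM -EFinD lee_fin.
rewrite (_ : t * (S^-1 * H) + (1 - t) * h n.+1 =
   (S + w n.+1)^-1 * (H + w n.+1 * h n.+1)) //.
rewrite /t; field.
by rewrite Sw gt_eqF.
Qed.

Lemma costR_sum s k x : costR k x s =
  \sum_(j < size s) sg_weight mu L1 (k + j) *
     (fine (f (sg_run P g mu L1 k x (take j s))) - fstar).
Proof.
elim: s k x => [|xi s IH] k x /=; first by rewrite big_ord0.
rewrite big_ord_recl addn0 /= IH; congr (_ + _); apply: eq_bigr => j _.
by rewrite /bump leq0n add0n add1n addnS addSn.
Qed.

Lemma final x0 T : Q x0 ->
  (iterE D T.+1 (fun s => f (sg_avg P g mu L1 x0 T s) - fstar%:E)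
     <= ((4 * L0 ^+ 2 * (T.+1)%:R
          + L1 ^+ 2 * setdist x0 [set z | Q z /\ f z = fstar%:E] ^+ 2)
         / (mu * \sum_(k < T.+1) sg_weight mu L1 k))%:E)%E.
Proof.
move=> Qx0.
have wpos : forall j, 0 < sg_weight mu L1 j by move=> j; apply: weight_gt0.
set W := \sum_(k < T.+1) sg_weight mu L1 k.
have W0 : 0 < W by apply: sum_pos.
set lam := W^-1.
have lam0 : 0 < lam by rewrite invr_gt0.
apply: le_trans.
  apply: (@iterE_mono _ _ _ D T.+1 _ (fun s => (0 + lam * costR 0 x0 s)%:E)) => s hs.
  rewrite /sg_avg -/W.
  have := @jensen T (sg_weight mu L1) (fun j => sg_iter P g mu L1 x0 s j)
     (fun j => fine (f (sg_iter P g mu L1 x0 s j))) wpos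
     (fun j => fQ (run_Q 0 x0 (take j s) Qx0)).
  move=> hj; apply: le_trans (leeB hj (le_refl (fstar%:E))) _.
  rewrite -EFinB lee_fin costR_sum hs add0r -/W.
  under [X in _ <= lam * X]eq_bigr do rewrite add0n.
  have -> : \sum_(j < T.+1) sg_weight mu L1 j *
        (fine (f (sg_run P g mu L1 0 x0 (take j s))) - fstar) =
      \sum_(j < T.+1) sg_weight mu L1 j * fine (f (sg_run P g mu L1 0 x0 (take j s)))
      - W * fstar.
    by rewrite /W mulr_suml -sumrB; apply: eq_bigr => j _; ring.
  by rewrite mulrBr /lam mulrA mulVf ?gt_eqF // mul1r.
apply: le_trans; first by apply: main_bound.
rewrite lee_fin add0r.
have ck0 : ck mu L1 0 = L1 ^+ 2 / mu by rewrite /ck mulr0n mulr0 mul0r add0r.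
have hS : Ssum 0 T.+1 <= T.+1%:R * (4 / mu).
  rewrite /Ssum; apply: le_trans.
    apply: (@ler_sum _ _ _ _ _ (fun _ => 4 / mu)) => j _.
    rewrite add0n; apply: kalpha_le => //.
  rewrite -[X in X <= _]/(\sum_(i < T.+1) (4 / mu)) sumr_const card_ord.
  rewrite -[_ *+ T.+1]mulr_natl; exact: lexx.
set sd := setdist x0 _.
have -> : (4 * L0 ^+ 2 * T.+1%:R + L1 ^+ 2 * sd ^+ 2) / (mu * W) =
   lam * (L1 ^+ 2 / mu * sd ^+ 2 + L0 ^+ 2 * (T.+1%:R * (4 / mu))).
  rewrite /lam; field.
  by rewrite !gt_eqF.
rewrite ck0; apply: ler_wpM2l; first exact: ltW.
apply: lerD; first exact: le_refl.
apply: ler_wpM2l => //; exact: sqr_ge0.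
Qed.
End Main.

Theorem theorem4p1 (R : realType) (d : nat) (f : 'rV[R]_d -> \bar R)
  (Q : set 'rV[R]_d) (fstar mu L0 L1 : R)
  (dk : measure_display) (Xi : measurableType dk) (D : probability Xi R)
  (g : 'rV[R]_d -> Xi -> 'rV[R]_d) (P : 'rV[R]_d -> 'rV[R]_d)
  (x0 : 'rV[R]_d) (T : nat) :
  (* f : R^d -> R u {+oo}, lower semicontinuous, convex *)
  (forall x, f x != -oo%E) ->
  lower_semicontinuous f ->
  convex_efun f ->
  (* Q nonempty closed convex, contained in dom f *)
  Q !=set0 -> closed Q -> convex_setv Q ->
  (forall x, Q x -> (f x < +oo)%E) ->
  (* X* = argmin_Q f nonempty, with minimum value fstar *)
  (exists2 xs, Q xs & f xs = fstar%:E) ->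
  (forall y, Q y -> (fstar%:E <= f y)%E) ->
  (* mu-quadratic growth *)
  0 < mu ->
  (forall x, Q x ->
     ((fstar + mu / 2 * setdist x [set z | Q z /\ f z = fstar%:E] ^+ 2)%:E
        <= f x)%E) ->
  (* P = P_Q, the Euclidean projection onto Q *)
  (forall x, is_proj Q x (P x)) ->
  (* stochastic subgradient oracle: E_xi g(x;xi) exists and lies in df(x) *)
  (forall x, Q x -> forall i : 'I_d,
     measurable_fun setT (fun xi => g x xi 0 i)) ->
  (forall x, Q x -> forall i : 'I_d,
     D.-integrable setT (fun xi => (g x xi 0 i)%:E)) ->
  (forall x, Q x ->
     is_subgrad f x (\row_(i < d) fine (\int[D]_xi (g x xi 0 i)%:E)%E)) ->
  (* second moment bound *)
  0 <= L0 -> 0 <= L1 ->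
  (forall x, Q x ->
     (\int[D]_xi ((enorm (g x xi)) ^+ 2)%:E
        <= (L0 ^+ 2)%:E + L1%:E * (f x - fstar%:E))%E) ->
  Q x0 ->
  (iterE D T.+1 (fun s => f (sg_avg P g mu L1 x0 T s) - fstar%:E)
     <= ((4 * L0 ^+ 2 * (T.+1)%:R
          + L1 ^+ 2 * setdist x0 [set z | Q z /\ f z = fstar%:E] ^+ 2)
         / (mu * \sum_(k < T.+1) sg_weight mu L1 k))%:E)%E.
Proof.
move=> fnoo _ cvx _ _ cQ Qfin Xne _ mu0 qg Pproj gmeas gint gsub _ L1ge gmom Qx0.
by apply: final.
Qed.
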